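(* Let $f$ be one of $G_3,G_4,G_5,G_6,G^{\#}_{10}$, and let $\widehat p_0,\dots,\widehat p_4$ be a normalized configuration of 5 distinct points on the unit sphere $S^2$ that minimizes the energy $\sum_{i<j}f(\|\widehat p_i-\widehat p_j\|)$ among all 5-point configurations on $S^2$. Then $\|\widehat p_4-\widehat p_0\|>1/2$ and $\|\widehat p_4-\widehat p_i\|>4/\sqrt{13}$ for $i=1,2,3$.
   Context: $G_k(r)=(4-r^2)^k$ and $G^{\#}_{10}=G_{10}+28G_5+102G_2$. A configuration $\widehat p_0,\dots,\widehat p_4$ on $S^2$ is normalized if $\widehat p_4=(0,0,1)$ and $\|\widehat p_4-\widehat p_0\|\le\|\widehat p_4-\widehat p_i\|$ for all $i\in\{1,2,3\}$. *)

(* Defs.v *)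
From Stdlib Require Import Reals Lra.
Open Scope R_scope.

Definition pt : Type := (R * R * R)%type.

Definition dist3 (p q : pt) : R :=
  let '(x1, y1, z1) := p in
  let '(x2, y2, z2) := q in
  sqrt ((x1 - x2)^2 + (y1 - y2)^2 + (z1 - z2)^2).

Definition on_S2 (p : pt) : Prop :=
  let '(x, y, z) := p in x^2 + y^2 + z^2 = 1.

Definition G (k : nat) (r : R) : R := (4 - r^2)^k.

Definition Gsharp10 (r : R) : R := G 10 r + 28 * G 5 r + 102 * G 2 r.

Definition config5_on_S2 (p : nat -> pt) : Prop :=
  forall i, (i < 5)%nat -> on_S2 (p i).

Definition distinct5 (p : nat -> pt) : Prop :=
  forall i j, (i < 5)%nat -> (j < 5)%nat -> i <> j -> p i <> p j.

(* energy: sum_{0 <= i < j <= 4} f(|p_i - p_j|) *)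
Definition energy5 (f : R -> R) (p : nat -> pt) : R :=
  sum_f_R0 (fun j => sum_f_R0 (fun i => f (dist3 (p i) (p (S j)))) j) 3.

Definition north : pt := (0, 0, 1).

Definition normalized5 (p : nat -> pt) : Prop :=
  p 4%nat = north /\
  forall i, (1 <= i <= 3)%nat -> dist3 (p 4%nat) (p 0%nat) <= dist3 (p 4%nat) (p i).

(* Main.v *)
Require Import Defs.
From Stdlib Require Import Reals.
From Stdlib Require Import Lra Lia Psatz.
Open Scope R_scope.

Definition sp (p q : pt) : R :=
  let '(x1, y1, z1) := p in
  let '(x2, y2, z2) := q in
  (x1 + x2)^2 + (y1 + y2)^2 + (z1 + z2)^2.

Lemma sqrt_pow2' x : 0 <= x -> sqrt x ^ 2 = x.
Proof. intros. simpl. rewrite Rmult_1_r. apply sqrt_sqrt; auto. Qed.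

Lemma dist3_sq p q : on_S2 p -> on_S2 q -> dist3 p q ^ 2 = 4 - sp p q.
Proof.
  destruct p as [[x1 y1] z1]; destruct q as [[x2 y2] z2];
  unfold on_S2, dist3, sp; intros H1 H2.
  rewrite sqrt_pow2'.
  - lra.
  - pose proof (pow2_ge_0 (x1-x2)); pose proof (pow2_ge_0 (y1-y2)); pose proof (pow2_ge_0 (z1-z2)); lra.
Qed.

Lemma dist3_nonneg p q : 0 <= dist3 p q.
Proof. destruct p as [[x1 y1] z1]; destruct q as [[x2 y2] z2]; apply sqrt_pos. Qed.

Lemma sp_nonneg p q : 0 <= sp p q.
Proof. destruct p as [[x1 y1] z1]; destruct q as [[x2 y2] z2]; unfold sp.
  pose proof (pow2_ge_0 (x1+x2)); pose proof (pow2_ge_0 (y1+y2)); pose proof (pow2_ge_0 (z1+z2)); lra. Qed.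

Lemma sp_sym p q : sp p q = sp q p.
Proof. destruct p as [[x1 y1] z1]; destruct q as [[x2 y2] z2]; simpl; ring. Qed.

Lemma G_sp k p q : on_S2 p -> on_S2 q -> G k (dist3 p q) = (sp p q) ^ k.
Proof. intros. unfold G. rewrite dist3_sq by auto. f_equal; ring. Qed.

Definition hh (s : R) : R := s^10 + 28 * s^5 + 102 * s^2.

Lemma Gs_sp p q : on_S2 p -> on_S2 q -> Gsharp10 (dist3 p q) = hh (sp p q).
Proof. intros. unfold Gsharp10, hh. rewrite !G_sp by auto. reflexivity. Qed.

Lemma energy5_expand f p : energy5 f p =
  f (dist3 (p 0%nat) (p 1%nat)) + f (dist3 (p 0%nat) (p 2%nat)) + f (dist3 (p 1%nat) (p 2%nat))
  + f (dist3 (p 0%nat) (p 3%nat)) + f (dist3 (p 1%nat) (p 3%nat)) + f (dist3 (p 2%nat) (p 3%nat))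
  + f (dist3 (p 0%nat) (p 4%nat)) + f (dist3 (p 1%nat) (p 4%nat)) + f (dist3 (p 2%nat) (p 4%nat))
  + f (dist3 (p 3%nat) (p 4%nat)).
Proof. unfold energy5; simpl; ring. Qed.

Lemma sum_sp p : config5_on_S2 p ->
  15 <= sp (p 0%nat) (p 1%nat) + sp (p 0%nat) (p 2%nat) + sp (p 1%nat) (p 2%nat)
  + sp (p 0%nat) (p 3%nat) + sp (p 1%nat) (p 3%nat) + sp (p 2%nat) (p 3%nat)
  + sp (p 0%nat) (p 4%nat) + sp (p 1%nat) (p 4%nat) + sp (p 2%nat) (p 4%nat)
  + sp (p 3%nat) (p 4%nat).
Proof.
  intros Hc.
  pose proof (Hc 0%nat ltac:(lia)) as H0. pose proof (Hc 1%nat ltac:(lia)) as H1.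
  pose proof (Hc 2%nat ltac:(lia)) as H2. pose proof (Hc 3%nat ltac:(lia)) as H3.
  pose proof (Hc 4%nat ltac:(lia)) as H4.
  destruct (p 0%nat) as [[x0 y0] z0]; destruct (p 1%nat) as [[x1 y1] z1];
  destruct (p 2%nat) as [[x2 y2] z2]; destruct (p 3%nat) as [[x3 y3] z3];
  destruct (p 4%nat) as [[x4 y4] z4]; unfold on_S2 in *; simpl.
  assert (0 <= (x0+x1+x2+x3+x4)^2 + (y0+y1+y2+y3+y4)^2 + (z0+z1+z2+z3+z4)^2).
  { pose proof (pow2_ge_0 (x0+x1+x2+x3+x4)); pose proof (pow2_ge_0 (y0+y1+y2+y3+y4)); pose proof (pow2_ge_0 (z0+z1+z2+z3+z4)); lra. }
  lra.
Qed.

Definition south : pt := (0, 0, -1).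
Definition e1 : pt := (1, 0, 0).
Definition e2 : pt := (-1/2, sqrt 3 / 2, 0).
Definition e3 : pt := (-1/2, - (sqrt 3 / 2), 0).
Definition tbp (i : nat) : pt :=
  match i with 0 => north | 1 => south | 2 => e1 | 3 => e2 | 4 => e3 | _ => north end.

Lemma s3 : sqrt 3 * sqrt 3 = 3.
Proof. apply sqrt_sqrt; lra. Qed.

Lemma tbp_on i : on_S2 (tbp i).
Proof.
  pose proof s3.
  destruct i as [|[|[|[|[|i]]]]]; unfold tbp, on_S2, north, south, e1, e2, e3; simpl; nra.
Qed.

Lemma tbp_config : config5_on_S2 tbp.
Proof. intros i _; apply tbp_on. Qed.

Section Gen.
Variable phi : R -> R.
Variable f : R -> R.
Hypothesis Hf : forall q1 q2, on_S2 q1 -> on_S2 q2 -> f (dist3 q1 q2) = phi (sp q1 q2).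
Hypothesis Hnn : forall x, 0 <= x -> 0 <= phi x.
Hypothesis Hmono : forall x y, 0 <= x <= y -> phi x <= phi y.
Hypothesis H1 : phi 0 + 6 * phi 2 + 3 * phi 1 < phi (15/4).
Hypothesis H2 : forall a b t1 t2 t3 t4 t5 t6 t7 t8,
  0 <= a -> 0 <= b -> 0 <= t1 -> 0 <= t2 -> 0 <= t3 -> 0 <= t4 -> 0 <= t5 ->
  0 <= t6 -> 0 <= t7 -> 0 <= t8 -> 36/13 <= a -> 36/13 <= b ->
  15 <= a + b + t1 + t2 + t3 + t4 + t5 + t6 + t7 + t8 ->
  phi 0 + 6 * phi 2 + 3 * phi 1 <
  phi a + phi b + phi t1 + phi t2 + phi t3 + phi t4 + phi t5 + phi t6 + phi t7 + phi t8.

Lemma energy_tbp : energy5 f tbp = phi 0 + 6 * phi 2 + 3 * phi 1.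
Proof.
  rewrite energy5_expand. rewrite !Hf by apply tbp_on.
  pose proof s3.
  unfold tbp, sp, north, south, e1, e2, e3.
  replace ((0 + 0) ^ 2 + (0 + 0) ^ 2 + (1 + -1) ^ 2) with 0 by ring.
  replace ((0 + 1) ^ 2 + (0 + 0) ^ 2 + (1 + 0) ^ 2) with 2 by ring.
  replace ((0 + 1) ^ 2 + (0 + 0) ^ 2 + (-1 + 0) ^ 2) with 2 by ring.
  replace ((0 + -1/2) ^ 2 + (0 + sqrt 3 / 2) ^ 2 + (1 + 0) ^ 2) with 2 by nra.
  replace ((0 + -1/2) ^ 2 + (0 + sqrt 3 / 2) ^ 2 + (-1 + 0) ^ 2) with 2 by nra.
  replace ((0 + -1/2) ^ 2 + (0 + - (sqrt 3 / 2)) ^ 2 + (1 + 0) ^ 2) with 2 by nra.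
  replace ((0 + -1/2) ^ 2 + (0 + - (sqrt 3 / 2)) ^ 2 + (-1 + 0) ^ 2) with 2 by nra.
  replace ((1 + -1/2) ^ 2 + (0 + sqrt 3 / 2) ^ 2 + (0 + 0) ^ 2) with 1 by nra.
  replace ((1 + -1/2) ^ 2 + (0 + - (sqrt 3 / 2)) ^ 2 + (0 + 0) ^ 2) with 1 by nra.
  replace ((-1/2 + -1/2) ^ 2 + (sqrt 3 / 2 + - (sqrt 3 / 2)) ^ 2 + (0 + 0) ^ 2) with 1 by nra.
  ring.
Qed.

Lemma gen_main (p : nat -> pt) :
  config5_on_S2 p ->
  normalized5 p ->
  (forall q : nat -> pt, config5_on_S2 q -> energy5 f p <= energy5 f q) ->
  dist3 (p 4%nat) (p 0%nat) > 1/2 /\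
  (forall i, (1 <= i <= 3)%nat -> dist3 (p 4%nat) (p i) > 4 / sqrt 13).
Proof.
  intros Hc [Hn Hnorm] Hmin.
  pose proof (Hmin tbp tbp_config) as Hle. rewrite energy_tbp in Hle.
  pose proof (Hc 0%nat ltac:(lia)) as P0. pose proof (Hc 1%nat ltac:(lia)) as P1.
  pose proof (Hc 2%nat ltac:(lia)) as P2. pose proof (Hc 3%nat ltac:(lia)) as P3.
  pose proof (Hc 4%nat ltac:(lia)) as P4.
  pose proof (sum_sp p Hc) as Hsum.
  rewrite energy5_expand in Hle. rewrite !Hf in Hle by assumption.
  pose proof (sp_nonneg (p 0%nat) (p 1%nat)). pose proof (sp_nonneg (p 0%nat) (p 2%nat)).
  pose proof (sp_nonneg (p 0%nat) (p 3%nat)). pose proof (sp_nonneg (p 0%nat) (p 4%nat)).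
  pose proof (sp_nonneg (p 1%nat) (p 2%nat)). pose proof (sp_nonneg (p 1%nat) (p 3%nat)).
  pose proof (sp_nonneg (p 1%nat) (p 4%nat)). pose proof (sp_nonneg (p 2%nat) (p 3%nat)).
  pose proof (sp_nonneg (p 2%nat) (p 4%nat)). pose proof (sp_nonneg (p 3%nat) (p 4%nat)).
  assert (Hd : forall i, (i < 4)%nat -> dist3 (p 4%nat) (p i) ^ 2 = 4 - sp (p i) (p 4%nat)).
  { intros i Hi. rewrite dist3_sq by (apply Hc; lia). apply f_equal, sp_sym. }
  split.
  - destruct (Rle_lt_dec (dist3 (p 4%nat) (p 0%nat)) (1/2)) as [Hl|Hl]; [|lra].
    exfalso. pose proof (Hd 0%nat ltac:(lia)) as E.
    pose proof (dist3_nonneg (p 4%nat) (p 0%nat)).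
    assert (15/4 <= sp (p 0%nat) (p 4%nat)) by nra.
    assert (phi (15/4) <= phi (sp (p 0%nat) (p 4%nat))) by (apply Hmono; lra).
    repeat match goal with H : 0 <= sp _ _ |- _ => apply Hnn in H end.
    lra.
  - intros i Hi.
    destruct (Rle_lt_dec (dist3 (p 4%nat) (p i)) (4 / sqrt 13)) as [Hl|Hl]; [|lra].
    exfalso.
    pose proof (Hnorm i Hi) as Hn0.
    assert (Hq : (4 / sqrt 13) ^ 2 = 16/13).
    { pose proof (sqrt_lt_R0 13 ltac:(lra)). pose proof (sqrt_sqrt 13 ltac:(lra)).
      field_simplify; [|lra]. rewrite sqrt_pow2'; lra. }
    pose proof (sqrt_lt_R0 13 ltac:(lra)).
    assert (0 < 4 / sqrt 13) by (apply Rdiv_lt_0_compat; lra).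
    pose proof (Hd 0%nat ltac:(lia)) as E0.
    pose proof (Hd i ltac:(lia)) as Ei.
    pose proof (dist3_nonneg (p 4%nat) (p 0%nat)).
    pose proof (dist3_nonneg (p 4%nat) (p i)).
    assert (36/13 <= sp (p 0%nat) (p 4%nat)) by nra.
    assert (36/13 <= sp (p i) (p 4%nat)) by nra.
    assert (i = 1 \/ i = 2 \/ i = 3)%nat as [ -> | [ -> | -> ] ] by lia.
    + pose proof (H2 (sp (p 0%nat) (p 4%nat)) (sp (p 1%nat) (p 4%nat))
        (sp (p 0%nat) (p 1%nat)) (sp (p 0%nat) (p 2%nat)) (sp (p 1%nat) (p 2%nat))
        (sp (p 0%nat) (p 3%nat)) (sp (p 1%nat) (p 3%nat)) (sp (p 2%nat) (p 3%nat))
        (sp (p 2%nat) (p 4%nat)) (sp (p 3%nat) (p 4%nat))).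
      lra.
    + pose proof (H2 (sp (p 0%nat) (p 4%nat)) (sp (p 2%nat) (p 4%nat))
        (sp (p 0%nat) (p 1%nat)) (sp (p 0%nat) (p 2%nat)) (sp (p 1%nat) (p 2%nat))
        (sp (p 0%nat) (p 3%nat)) (sp (p 1%nat) (p 3%nat)) (sp (p 2%nat) (p 3%nat))
        (sp (p 1%nat) (p 4%nat)) (sp (p 3%nat) (p 4%nat))).
      lra.
    + pose proof (H2 (sp (p 0%nat) (p 4%nat)) (sp (p 3%nat) (p 4%nat))
        (sp (p 0%nat) (p 1%nat)) (sp (p 0%nat) (p 2%nat)) (sp (p 1%nat) (p 2%nat))
        (sp (p 0%nat) (p 3%nat)) (sp (p 1%nat) (p 3%nat)) (sp (p 2%nat) (p 3%nat))
        (sp (p 1%nat) (p 4%nat)) (sp (p 2%nat) (p 4%nat))).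
      lra.
Qed.
End Gen.

Lemma pow_H1 k : (3 <= k <= 6)%nat -> 0^k + 6 * 2^k + 3 * 1^k < (15/4)^k.
Proof. intros Hk. assert (k = 3 \/ k = 4 \/ k = 5 \/ k = 6)%nat as [ -> | [ -> | [ -> | -> ] ] ] by lia; simpl; lra. Qed.

Lemma tan3 t c : 0 <= t -> 0 <= c -> c^3 + 3*c^2*(t-c) <= t^3.
Proof. intros. assert (0 <= (t-c)^2*(t+2*c)) by (apply Rmult_le_pos; [apply pow2_ge_0|lra]). nra. Qed.

Lemma tan3' a A c : 0 <= c <= A -> A <= a -> A^3 + 3*c^2*(a-A) <= a^3.
Proof. intros. assert (0 <= (a-A)*(a*a+a*A+A*A - 3*c*c)).
  { apply Rmult_le_pos; nra. } nra. Qed.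

Lemma pow_H2 k : (3 <= k <= 6)%nat -> forall a b t1 t2 t3 t4 t5 t6 t7 t8,
  0 <= a -> 0 <= b -> 0 <= t1 -> 0 <= t2 -> 0 <= t3 -> 0 <= t4 -> 0 <= t5 ->
  0 <= t6 -> 0 <= t7 -> 0 <= t8 -> 36/13 <= a -> 36/13 <= b ->
  15 <= a + b + t1 + t2 + t3 + t4 + t5 + t6 + t7 + t8 ->
  0^k + 6 * 2^k + 3 * 1^k <
  a^k + b^k + t1^k + t2^k + t3^k + t4^k + t5^k + t6^k + t7^k + t8^k.
Proof.
  intros Hk a b t1 t2 t3 t4 t5 t6 t7 t8 ? ? ? ? ? ? ? ? ? ? Ha Hb Hs.
  assert (k = 3 \/ 4 <= k)%nat as [ -> | Hk4] by lia.
  - set (c := 123/104). set (A := 36/13).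
    pose proof (tan3 t1 c ltac:(lra) ltac:(unfold c; lra)).
    pose proof (tan3 t2 c ltac:(lra) ltac:(unfold c; lra)).
    pose proof (tan3 t3 c ltac:(lra) ltac:(unfold c; lra)).
    pose proof (tan3 t4 c ltac:(lra) ltac:(unfold c; lra)).
    pose proof (tan3 t5 c ltac:(lra) ltac:(unfold c; lra)).
    pose proof (tan3 t6 c ltac:(lra) ltac:(unfold c; lra)).
    pose proof (tan3 t7 c ltac:(lra) ltac:(unfold c; lra)).
    pose proof (tan3 t8 c ltac:(lra) ltac:(unfold c; lra)).
    pose proof (tan3' a A c ltac:(unfold c, A; lra) Ha).
    pose proof (tan3' b A c ltac:(unfold c, A; lra) Hb).
    unfold c, A in *. simpl in *. lra.
  - pose proof (pow_incr (36/13) a k ltac:(lra)).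
    pose proof (pow_incr (36/13) b k ltac:(lra)).
    pose proof (pow_le t1 k ltac:(lra)). pose proof (pow_le t2 k ltac:(lra)).
    pose proof (pow_le t3 k ltac:(lra)). pose proof (pow_le t4 k ltac:(lra)).
    pose proof (pow_le t5 k ltac:(lra)). pose proof (pow_le t6 k ltac:(lra)).
    pose proof (pow_le t7 k ltac:(lra)). pose proof (pow_le t8 k ltac:(lra)).
    assert (0^k + 6 * 2^k + 3 * 1^k < 2 * (36/13)^k).
    { assert (k = 4 \/ k = 5 \/ k = 6)%nat as [ -> | [ -> | -> ] ] by lia; simpl; lra. }
    lra.
Qed.

Lemma hh_nn x : 0 <= x -> 0 <= hh x.
Proof. intros. unfold hh. pose proof (pow_le x 10 H). pose proof (pow_le x 5 H).
  pose proof (pow_le x 2 H). lra. Qed.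

Lemma hh_mono x y : 0 <= x <= y -> hh x <= hh y.
Proof. intros. unfold hh. pose proof (pow_incr x y 10 H). pose proof (pow_incr x y 5 H).
  pose proof (pow_incr x y 2 H). lra. Qed.

Lemma hh_H2 : forall a b t1 t2 t3 t4 t5 t6 t7 t8,
  0 <= a -> 0 <= b -> 0 <= t1 -> 0 <= t2 -> 0 <= t3 -> 0 <= t4 -> 0 <= t5 ->
  0 <= t6 -> 0 <= t7 -> 0 <= t8 -> 36/13 <= a -> 36/13 <= b ->
  15 <= a + b + t1 + t2 + t3 + t4 + t5 + t6 + t7 + t8 ->
  hh 0 + 6 * hh 2 + 3 * hh 1 <
  hh a + hh b + hh t1 + hh t2 + hh t3 + hh t4 + hh t5 + hh t6 + hh t7 + hh t8.
Proof.
  intros a b t1 t2 t3 t4 t5 t6 t7 t8 ? ? ? ? ? ? ? ? ? ? Ha Hb Hs.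
  pose proof (hh_mono (36/13) a ltac:(lra)). pose proof (hh_mono (36/13) b ltac:(lra)).
  pose proof (hh_nn t1 ltac:(lra)). pose proof (hh_nn t2 ltac:(lra)).
  pose proof (hh_nn t3 ltac:(lra)). pose proof (hh_nn t4 ltac:(lra)).
  pose proof (hh_nn t5 ltac:(lra)). pose proof (hh_nn t6 ltac:(lra)).
  pose proof (hh_nn t7 ltac:(lra)). pose proof (hh_nn t8 ltac:(lra)).
  assert (hh 0 + 6 * hh 2 + 3 * hh 1 < 2 * hh (36/13)) by (unfold hh; simpl; lra).
  lra.
Qed.

Lemma pow_case k p : (3 <= k <= 6)%nat ->
  config5_on_S2 p -> normalized5 p ->
  (forall q : nat -> pt, config5_on_S2 q -> energy5 (G k) p <= energy5 (G k) q) ->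
  dist3 (p 4%nat) (p 0%nat) > 1/2 /\
  (forall i, (1 <= i <= 3)%nat -> dist3 (p 4%nat) (p i) > 4 / sqrt 13).
Proof.
  intros Hk. apply (gen_main (fun x => x ^ k) (G k)).
  - intros; apply G_sp; auto.
  - intros; apply pow_le; auto.
  - intros; apply pow_incr; auto.
  - apply pow_H1; auto.
  - apply pow_H2; auto.
Qed.

Theorem lemma2p1 (f : R -> R) (p : nat -> pt) :
  (f = G 3 \/ f = G 4 \/ f = G 5 \/ f = G 6 \/ f = Gsharp10) ->
  config5_on_S2 p ->
  distinct5 p ->
  normalized5 p ->
  (forall q : nat -> pt, config5_on_S2 q -> energy5 f p <= energy5 f q) ->
  dist3 (p 4%nat) (p 0%nat) > 1/2 /\
  (forall i, (1 <= i <= 3)%nat -> dist3 (p 4%nat) (p i) > 4 / sqrt 13).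
Proof.
  intros Hf Hc _ Hn Hmin.
  destruct Hf as [-> | [-> | [-> | [-> | ->]]]];
    try (refine (pow_case _ p _ Hc Hn Hmin); lia).
  refine (gen_main hh Gsharp10 _ _ _ _ _ p Hc Hn Hmin).
  - intros; apply Gs_sp; auto.
  - apply hh_nn.
  - apply hh_mono.
  - unfold hh; simpl; lra.
  - apply hh_H2.
Qed.
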